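(* Let $\lambda_k\coloneqq-1/k+ik$ for $k\in\mathbb{N}$, and let $A$ be the diagonal operator on $\ell^2$ given by $A(\zeta_k)_{k\in\mathbb{N}}=(\lambda_k\zeta_k)_{k\in\mathbb{N}}$ with domain $D(A)=\{(\zeta_k)\in\ell^2:(\lambda_k\zeta_k)\in\ell^2\}$. Then $A$ generates a polynomially stable $C_0$-semigroup with parameter $\beta=1$, and for every $\alpha>0$, \[ \liminf_{t\to\infty}t^{\alpha/3}\big\|e^{A^{-1}t}(-A)^{-\alpha}\big\|\ge\frac{1}{2^{\alpha/2}}\Big(\frac{\alpha}{3e}\Big)^{\alpha/3}. \]
   Context: A $C_0$-semigroup $(e^{At})_{t\ge0}$ on a Hilbert space is called polynomially stable with parameter $\beta>0$ if it is bounded and there exist $M,t_0>0$ with $\|e^{At}(I-A)^{-1}\|\le M t^{-1/\beta}$ for all $t\ge t_0$. For this diagonal operator, $e^{A^{-1}t}(-A)^{-\alpha}$ is the diagonal operator with entries $e^{t/\lambda_k}(-\lambda_k)^{-\alpha}$ (principal branch). *)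

(* Defs.v *)
From Stdlib Require Import Reals Lra.
From Coquelicot Require Import Coquelicot.
Open Scope R_scope.

(** Sequences indexed by nat; index n stands for k = n+1 in the paper. *)
Definition seqC := nat -> C.
Definition op := seqC -> seqC.

Definition cexp (z : C) : C :=
  (exp (fst z) * cos (snd z), exp (fst z) * sin (snd z)).

Definition Arg (z : C) : R :=
  let x := fst z in let y := snd z in
  match Rlt_dec 0 x with
  | left _ => atan (y / x)
  | right _ =>
    match Rlt_dec x 0 with
    | left _ => match Rle_dec 0 y with
                | left _ => atan (y / x) + PI
                | right _ => atan (y / x) - PI end
    | right _ => match Rlt_dec 0 y with
                 | left _ => PI / 2
                 | right _ => match Rlt_dec y 0 with
                              | left _ => - (PI / 2)
                              | right _ => 0 end end
    end
  end.

(** principal branch z^w = exp(w Log z), w real, z <> 0 *)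
Definition cpowR (z : C) (w : R) : C :=
  cexp (w * ln (Cmod z), w * Arg z).

Definition in_l2 (x : seqC) : Prop := ex_series (fun n => (Cmod (x n)) ^ 2).
Definition l2norm (x : seqC) : R := sqrt (Series (fun n => (Cmod (x n)) ^ 2)).
Definition seq_sub (x y : seqC) : seqC := fun n => Cminus (x n) (y n).
Definition seq_scal (c : R) (x : seqC) : seqC := fun n => Cmult (RtoC c) (x n).

Definition opnorm (T : op) : Rbar :=
  Lub_Rbar (fun r => exists x, in_l2 x /\ l2norm x <= 1 /\ in_l2 (T x)
                               /\ r = l2norm (T x)).

Definition bounded_op (T : op) : Prop :=
  (forall x, in_l2 x -> in_l2 (T x)) /\ is_finite (opnorm T).

Definition diag (d : nat -> C) : op := fun x n => Cmult (d n) (x n).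

Definition is_C0_semigroup (S : R -> op) : Prop :=
  (forall t, 0 <= t -> bounded_op (S t)) /\
  (forall x, in_l2 x -> S 0 x = x) /\
  (forall t s x, 0 <= t -> 0 <= s -> in_l2 x -> S (t + s) x = S t (S s x)) /\
  (forall x, in_l2 x ->
     filterlim (fun t => l2norm (seq_sub (S t x) x)) (at_right 0) (locally 0)).

Definition generates (A : op) (DA : seqC -> Prop) (S : R -> op) : Prop :=
  (forall x, DA x -> in_l2 x) /\
  (forall x, in_l2 x ->
     (DA x <-> exists y, in_l2 y /\
        filterlim (fun t => l2norm (seq_sub (seq_scal (/ t) (seq_sub (S t x) x)) y))
                  (at_right 0) (locally 0))) /\
  (forall x, DA x ->
     filterlim (fun t => l2norm (seq_sub (seq_scal (/ t) (seq_sub (S t x) x)) (A x)))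
               (at_right 0) (locally 0)).

Definition polynomially_stable (A : op) (DA : seqC -> Prop) (S : R -> op)
  (beta : R) : Prop :=
  (exists K, forall t, 0 <= t -> Rbar_le (opnorm (S t)) (Finite K)) /\
  exists Rres : op,
    (forall x, in_l2 x -> DA (Rres x) /\ seq_sub (Rres x) (A (Rres x)) = x) /\
    (forall x, DA x -> Rres (seq_sub x (A x)) = x) /\
    exists M t0, 0 < M /\ 0 < t0 /\
      forall t, t0 <= t ->
        Rbar_le (opnorm (fun x => S t (Rres x))) (Finite (M * Rpower t (- / beta))).

Definition liminf_infty_ge (f : R -> Rbar) (b : R) : Prop :=
  forall eps, 0 < eps -> exists T, forall t, T <= t -> Rbar_le (Finite (b - eps)) (f t).

(** the concrete data: lambda_k = -1/k + i k, with k = n+1 *)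
Definition lam (n : nat) : C := (- / INR (S n), INR (S n)).
Definition Aop : op := diag lam.
Definition DAop (x : seqC) : Prop := in_l2 x /\ in_l2 (Aop x).

(** e^{A^{-1} t} (-A)^{-alpha}: diagonal with entries e^{t/lambda_k} (-lambda_k)^{-alpha} *)
Definition expAinv_negApow (t alpha : R) : op :=
  diag (fun n => Cmult (cexp (Cmult (RtoC t) (Cinv (lam n))))
                       (cpowR (Copp (lam n)) (- alpha))).

(* Main.v *)
Require Import Defs.
From Stdlib Require Import Reals Lra Lia ZArith Ratan FunctionalExtensionality.
From Coquelicot Require Import Coquelicot.
Open Scope R_scope.

Lemma sin_abs_le y : 0 <= y -> - y <= sin y <= y.
Proof.
  intros Hy. destruct (Req_dec y 0) as [->|Hn]. rewrite sin_0; lra.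
  assert (Hs := sin_lt_x y ltac:(lra)). split; [|lra].
  destruct (Rle_dec 1 y). pose proof (SIN_bound y); lra.
  assert (0 <= sin y). apply sin_ge_0; try lra. pose proof PI_RGT_0. pose proof PI2_1. lra. lra.
Qed.

Lemma sin_sq_le y : sin y ^ 2 <= y ^ 2.
Proof.
  destruct (Rle_dec 0 y). pose proof (sin_abs_le y r). nra.
  pose proof (sin_abs_le (-y) ltac:(lra)). rewrite sin_neg in H. nra.
Qed.

Lemma one_minus_cos x : 1 - cos x <= x ^ 2 / 2.
Proof.
  replace x with (2 * (x/2)) at 1 by field. rewrite cos_2a_sin.
  pose proof (sin_sq_le (x/2)). nra.
Qed.

Lemma cexp_mod z : Cmod (cexp z) = exp (fst z).
Proof.
  destruct z as [a b]. unfold Cmod, cexp; cbn [fst snd].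
  replace ((exp a * cos b) ^ 2 + (exp a * sin b) ^ 2) with (exp a ^ 2).
  apply sqrt_pow2. left; apply exp_pos.
  pose proof (sin2_cos2 b). unfold Rsqr in H. nra.
Qed.

Lemma cexp_m1 a b : a <= 0 -> Cmod (Cminus (cexp (a,b)) 1) <= Cmod (a,b).
Proof.
  intros Ha. unfold Cmod, cexp, Cminus, Cplus, Copp, RtoC; cbn [fst snd]. apply sqrt_le_1_alt.
  pose proof (sin2_cos2 b). unfold Rsqr in H.
  pose proof (exp_ineq1_le a). assert (exp a <= 1). rewrite <- exp_0. destruct Ha. left; apply exp_increasing; lra. subst; lra.
  pose proof (exp_pos a). pose proof (one_minus_cos b).
  assert (A1 : (1 - exp a)^2 <= a^2) by nra.
  assert (A2 : 2 * exp a * (1 - cos b) <= b ^2). pose proof (COS_bound b). nra.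
  assert (H5 : exp a ^ 2 * (sin b * sin b + cos b * cos b) = exp a ^ 2) by (rewrite H; ring).
  nra.
Qed.

Definition tends0 (h : R -> R) := forall eps, 0 < eps -> exists delta, 0 < delta /\ forall t, 0 < t < delta -> Rabs (h t) < eps.

Lemma tends0_filterlim h : tends0 h -> filterlim h (at_right 0) (locally 0).
Proof.
  intros H. apply filterlim_locally. intros eps. destruct (H eps (cond_pos eps)) as [d [Hd H']].
  exists (mkposreal d Hd). intros y Hy Hy0. change (Rabs (h y + - 0) < eps).
  change (Rabs (y + - 0) < d) in Hy. rewrite Ropp_0, Rplus_0_r in *. apply H'. split; auto.
  apply Rabs_lt_between in Hy. lra.
Qed.

Lemma filterlim_tends0 h : filterlim h (at_right 0) (locally 0) -> tends0 h.
Proof.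
  intros H eps He. apply filterlim_locally with (eps := mkposreal eps He) in H.
  destruct H as [d Hd]. exists d. split. apply cond_pos. intros t Ht.
  specialize (Hd t).
  assert (HH : Rabs (h t + - 0) < eps). apply Hd. change (Rabs (t + - 0) < d). rewrite Ropp_0, Rplus_0_r. rewrite Rabs_pos_eq; lra. lra.
  rewrite Ropp_0, Rplus_0_r in HH; exact HH.
Qed.


Lemma Series_nonneg a : (forall n, 0 <= a n) -> ex_series a -> 0 <= Series a.
Proof.
  intros H E. rewrite <- (Rmult_0_l (Series a)), <- Series_scal_l.
  apply Series_le; auto. intros n; specialize (H n); split; lra.
Qed.

Lemma sum_ge_term a N : (forall n, 0 <= a n) -> a N <= sum_f_R0 a N.
Proof.
  intros H. destruct N. simpl; lra. simpl. pose proof (cond_pos_sum a N H). lra.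
Qed.

Lemma term_le_Series a N : (forall n, 0 <= a n) -> ex_series a -> a N <= Series a.
Proof.
  intros H E. rewrite (Series_incr_n a (S N)) by (auto; lia). simpl pred.
  pose proof (sum_ge_term a N H).
  assert (0 <= Series (fun k => a (S N + k)%nat)).
  apply Series_nonneg. auto. apply (ex_series_incr_n a (S N)); auto. lra.
Qed.

Lemma small_tail g eps : ex_series g -> 0 < eps ->
  exists N, Series (fun k => g (S N + k)%nat) < eps.
Proof.
  intros E He. pose proof (Series_correct g E) as C.
  unfold is_series in C. pose proof (proj1 (filterlim_locally (F:=eventually) (sum_n g) (Series g)) C (mkposreal eps He)) as C1. clear C; rename C1 into C.
  destruct C as [N0 HN]. exists N0. specialize (HN N0 (le_n _)).
  change (Rabs (sum_n g N0 + - Series g) < eps) in HN.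
  rewrite (Series_incr_n g (S N0)) in HN by (auto; lia). simpl pred in HN.
  rewrite sum_n_Reals in HN. apply Rabs_lt_between in HN. lra.
Qed.

Lemma finsum_tends0 (f : R -> nat -> R) : (forall n, tends0 (fun t => f t n)) ->
  forall M, tends0 (fun t => sum_f_R0 (f t) M).
Proof.
  intros H M. induction M.
  - simpl. apply H.
  - intros eps He. destruct (IHM (eps/2) ltac:(lra)) as [d1 [Hd1 H1]].
    destruct (H (S M) (eps/2) ltac:(lra)) as [d2 [Hd2 H2]].
    exists (Rmin d1 d2). split. apply Rmin_glb_lt; auto.
    intros t Ht. simpl. pose proof (Rmin_l d1 d2). pose proof (Rmin_r d1 d2).
    specialize (H1 t ltac:(lra)). specialize (H2 t ltac:(lra)).
    eapply Rle_lt_trans. apply Rabs_triang. lra.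
Qed.

Lemma dom_tends0 (f : R -> nat -> R) (g : nat -> R) :
  ex_series g -> (forall t n, 0 < t -> 0 <= f t n <= g n) ->
  (forall n, tends0 (fun t => f t n)) -> tends0 (fun t => Series (f t)).
Proof.
  intros Eg Hb Hl eps He.
  destruct (small_tail g (eps/2) Eg ltac:(lra)) as [N HN].
  destruct (finsum_tends0 f Hl N (eps/2) ltac:(lra)) as [d [Hd H1]].
  exists d; split; auto. intros t Ht.
  assert (Ef : ex_series (f t)).
  { apply (@ex_series_le R_AbsRing R_CompleteNormedModule) with g; auto. intros n. unfold norm; simpl; unfold abs; simpl.
    specialize (Hb t n ltac:(lra)). rewrite Rabs_pos_eq; lra. }
  assert (Hp : forall n, 0 <= f t n) by (intros n; apply (Hb t n); lra).
  rewrite Rabs_pos_eq by (apply Series_nonneg; auto).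
  rewrite (Series_incr_n (f t) (S N)) by (auto; lia). simpl pred.
  specialize (H1 t Ht). rewrite Rabs_pos_eq in H1 by (apply cond_pos_sum; auto).
  assert (Series (fun k => f t (S N + k)%nat) <= Series (fun k => g (S N + k)%nat)).
  { apply Series_le. intros n; apply Hb; lra. apply (ex_series_incr_n g (S N)); auto. }
  lra.
Qed.

Lemma sqrt_tends0 (h : R -> R) : (forall t, 0 < t -> 0 <= h t) -> tends0 h -> tends0 (fun t => sqrt (h t)).
Proof.
  intros Hp H eps He. destruct (H (eps^2) ltac:(nra)) as [d [Hd H1]].
  exists d; split; auto. intros t Ht. specialize (H1 t Ht). specialize (Hp t ltac:(lra)).
  rewrite Rabs_pos_eq in H1 by auto. rewrite Rabs_pos_eq by (apply sqrt_pos).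
  rewrite <- (sqrt_pow2 eps) by lra. apply sqrt_lt_1_alt. lra.
Qed.

Lemma tends0_ext (h1 h2 : R -> R) : (forall t, h1 t = h2 t) -> tends0 h1 -> tends0 h2.
Proof.
  intros E H eps He. destruct (H eps He) as [d [Hd H1]]. exists d; split; auto.
  intros t Ht. rewrite <- E; auto.
Qed.


Lemma ex_series_R_le (a b : nat -> R) : (forall n, 0 <= a n <= b n) -> ex_series b -> ex_series a.
Proof.
  intros H E. apply (@ex_series_le R_AbsRing R_CompleteNormedModule) with b; auto.
  intros n. unfold norm; simpl; unfold abs; simpl. specialize (H n). rewrite Rabs_pos_eq; lra.
Qed.

Lemma ex_series_R_scal c (a : nat -> R) : ex_series a -> ex_series (fun n => c * a n).
Proof.
  intros E. apply ex_series_ext with (fun n => scal c (a n)). intros; reflexivity.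
  apply (@ex_series_scal_l R_AbsRing R_NormedModule); auto.
Qed.

Lemma ex_series_R_plus (a b : nat -> R) : ex_series a -> ex_series b -> ex_series (fun n => a n + b n).
Proof.
  intros Ea Eb. apply ex_series_ext with (fun n => plus (a n) (b n)). intros; reflexivity.
  apply (@ex_series_plus R_AbsRing R_NormedModule); auto.
Qed.

Lemma Cmod_sq_nonneg z : 0 <= Cmod z ^ 2.
Proof. pose proof (Cmod_ge_0 z). nra. Qed.

Lemma diag_l2 d M x : 0 <= M -> (forall n, Cmod (d n) <= M) -> in_l2 x ->
  in_l2 (diag d x) /\ l2norm (diag d x) <= M * l2norm x.
Proof.
  intros HM Hd Hx.
  assert (Hb : forall n, 0 <= Cmod (diag d x n) ^ 2 <= M^2 * Cmod (x n) ^ 2).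
  { intros n. unfold diag. rewrite Cmod_mult. pose proof (Hd n). pose proof (Cmod_ge_0 (d n)).
    pose proof (Cmod_ge_0 (x n)). split. nra.
    rewrite Rpow_mult_distr. apply Rmult_le_compat_r. nra. apply pow_incr; lra. }
  assert (E : in_l2 (diag d x)).
  { apply ex_series_R_le with (fun n => M^2 * Cmod (x n) ^ 2); auto. apply ex_series_R_scal; auto. }
  split; auto.
  unfold l2norm. rewrite <- (sqrt_pow2 M) by auto. rewrite <- sqrt_mult_alt by nra.
  apply sqrt_le_1_alt. rewrite <- Series_scal_l. apply Series_le; auto. apply ex_series_R_scal; auto.
Qed.

Lemma opnorm_le d M : 0 <= M -> (forall n, Cmod (d n) <= M) -> Rbar_le (opnorm (diag d)) (Finite M).
Proof.
  intros HM Hd. unfold opnorm.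
  destruct (Lub_Rbar_correct (fun r => exists x, in_l2 x /\ l2norm x <= 1 /\ in_l2 (diag d x)
                               /\ r = l2norm (diag d x))) as [_ Hl].
  apply Hl. intros r [x [Hx [Hn [_ ->]]]]. simpl.
  destruct (diag_l2 d M x HM Hd Hx) as [_ H]. nra.
Qed.

Lemma sum_single (a : nat -> R) n : (forall k, k <> n -> a k = 0) ->
  forall N, sum_f_R0 a N = if Compare_dec.le_dec n N then a n else 0.
Proof.
  intros H N. induction N.
  - simpl. destruct (Compare_dec.le_dec n 0). replace n with 0%nat by lia. auto. apply H. lia.
  - simpl. rewrite IHN. destruct (Compare_dec.le_dec n N), (Compare_dec.le_dec n (S N)); try lia.
    all: try (rewrite (H (S N)) by lia; ring). replace n with (S N) by lia. ring.
Qed.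

Lemma series_single (a : nat -> R) n : (forall k, k <> n -> a k = 0) -> is_series a (a n).
Proof.
  intros H. unfold is_series. apply filterlim_ext_loc with (fun _ => a n).
  exists n. intros N HN. rewrite sum_n_Reals, (sum_single a n H). destruct (Compare_dec.le_dec n N); auto; lia.
  apply filterlim_const.
Qed.

Lemma l2_single (z : seqC) n : (forall k, k <> n -> z k = RtoC 0) -> in_l2 z /\ l2norm z = Cmod (z n).
Proof.
  intros H. assert (Hs : is_series (fun k => Cmod (z k) ^ 2) (Cmod (z n) ^ 2)).
  { apply (series_single (fun k => Cmod (z k) ^ 2)). intros k Hk. rewrite H by auto.
    rewrite Cmod_0. ring. }
  split. exists (Cmod (z n) ^ 2); auto.
  unfold l2norm. rewrite (is_series_unique _ _ Hs). apply sqrt_pow2, Cmod_ge_0.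
Qed.

Definition unitv (n : nat) : seqC := fun k => if Nat.eq_dec k n then RtoC 1 else RtoC 0.

Lemma opnorm_ge d n : Rbar_le (Finite (Cmod (d n))) (opnorm (diag d)).
Proof.
  unfold opnorm.
  destruct (Lub_Rbar_correct (fun r => exists x, in_l2 x /\ l2norm x <= 1 /\ in_l2 (diag d x)
                               /\ r = l2norm (diag d x))) as [Hu _].
  apply Hu.
  assert (He : forall k, k <> n -> unitv n k = RtoC 0).
  { intros k Hk. unfold unitv. destruct (Nat.eq_dec k n); auto; lia. }
  assert (Hde : forall k, k <> n -> diag d (unitv n) k = RtoC 0).
  { intros k Hk. unfold diag. rewrite He by auto. apply Cmult_0_r. }
  destruct (l2_single _ n He) as [E1 N1]. destruct (l2_single _ n Hde) as [E2 N2].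
  exists (unitv n). repeat split; auto.
  rewrite N1. unfold unitv. destruct (Nat.eq_dec n n); try lia. rewrite Cmod_1; lra.
  rewrite N2. unfold diag, unitv. destruct (Nat.eq_dec n n); try lia. rewrite Cmult_1_r. auto.
Qed.

Lemma Rbar_fin_between a x b : Rbar_le (Finite a) x -> Rbar_le x (Finite b) -> is_finite x.
Proof. destruct x; simpl; intros; try contradiction; reflexivity. Qed.

Lemma diag_bounded d M : 0 <= M -> (forall n, Cmod (d n) <= M) -> bounded_op (diag d).
Proof.
  intros HM Hd. split. intros x Hx. apply (diag_l2 d M x HM Hd Hx).
  apply (Rbar_fin_between _ _ _ (opnorm_ge d 0) (opnorm_le d M HM Hd)).
Qed.


Ltac cring := unfold Cminus, Cmult, Cplus, Copp, RtoC; apply injective_projections; simpl; ring.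

Lemma Cmod_le_sum x y : Cmod (x, y) <= Rabs x + Rabs y.
Proof.
  unfold Cmod; cbn [fst snd]. rewrite <- (sqrt_pow2 (Rabs x + Rabs y)).
  apply sqrt_le_1_alt. pose proof (Rabs_pos x). pose proof (Rabs_pos y).
  rewrite <- (pow2_abs x), <- (pow2_abs y). nra.
  pose proof (Rabs_pos x). pose proof (Rabs_pos y). lra.
Qed.

Lemma deriv_re a b : derivable_pt_lim (fun t => exp (t*a) * cos (t*b)) 0 a.
Proof.
  apply is_derive_Reals. auto_derive. auto. rewrite !Rmult_0_l, exp_0, cos_0, sin_0. ring.
Qed.
Lemma deriv_im a b : derivable_pt_lim (fun t => exp (t*a) * sin (t*b)) 0 b.
Proof.
  apply is_derive_Reals. auto_derive. auto. rewrite !Rmult_0_l, exp_0, cos_0, sin_0. ring.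
Qed.

Lemma cexp_deriv a b :
  tends0 (fun t => Cmod (Cminus (Cmult (RtoC (/ t)) (Cminus (cexp (t*a, t*b)) (RtoC 1))) (a, b))).
Proof.
  intros eps He. destruct (deriv_re a b (eps/2) ltac:(lra)) as [d1 H1].
  destruct (deriv_im a b (eps/2) ltac:(lra)) as [d2 H2].
  exists (Rmin d1 d2). split. apply Rmin_glb_lt; apply cond_pos.
  intros t Ht. pose proof (Rmin_l d1 d2). pose proof (Rmin_r d1 d2).
  assert (Hta : Rabs t < d1) by (rewrite Rabs_pos_eq; lra).
  assert (Htb : Rabs t < d2) by (rewrite Rabs_pos_eq; lra).
  specialize (H1 t ltac:(lra) Hta). specialize (H2 t ltac:(lra) Htb).
  rewrite Rplus_0_l, !Rmult_0_l, exp_0, cos_0 in H1. rewrite Rplus_0_l, !Rmult_0_l, exp_0, sin_0 in H2.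
  rewrite Rabs_pos_eq by apply Cmod_ge_0.
  unfold Cminus, Cmult, Cplus, Copp, RtoC, cexp; cbn [fst snd].
  eapply Rle_lt_trans. apply Cmod_le_sum.
  match goal with |- Rabs ?X + Rabs ?Y < _ =>
    replace X with ((exp (t * a) * cos (t * b) - 1 * 1) / t - a) by (field; lra);
    replace Y with ((exp (t * a) * sin (t * b) - 1 * 0) / t - b) by (field; lra) end.
  lra.
Qed.

Definition kk (n : nat) : R := INR (S n).
Lemma kk_pos n : 0 < kk n.
Proof. unfold kk. apply lt_0_INR. lia. Qed.
Lemma kk_ge1 n : 1 <= kk n.
Proof. unfold kk. rewrite S_INR. pose proof (pos_INR n). lra. Qed.

Definition Et (t : R) (n : nat) : C := cexp (t * fst (lam n), t * snd (lam n)).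
Definition Sg (t : R) : op := diag (Et t).

Lemma lam_fst n : fst (lam n) = - / kk n.
Proof. reflexivity. Qed.
Lemma lam_snd n : snd (lam n) = kk n.
Proof. reflexivity. Qed.

Lemma lam_fst_le0 n : fst (lam n) <= 0.
Proof. rewrite lam_fst. pose proof (Rinv_0_lt_compat _ (kk_pos n)). lra. Qed.

Lemma Et_mod t n : Cmod (Et t n) = exp (t * fst (lam n)).
Proof. unfold Et. rewrite cexp_mod. reflexivity. Qed.

Lemma Et_le1 t n : 0 <= t -> Cmod (Et t n) <= 1.
Proof.
  intros Ht. rewrite Et_mod. rewrite <- exp_0. pose proof (lam_fst_le0 n).
  destruct (Req_dec (t * fst (lam n)) 0) as [->|]. lra. left; apply exp_increasing. nra.
Qed.

Lemma Et_0 n : Et 0 n = RtoC 1.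
Proof.
  unfold Et, cexp. rewrite !Rmult_0_l. cbn [fst snd]. rewrite exp_0, cos_0, sin_0.
  unfold RtoC. f_equal; ring.
Qed.

Lemma Et_add t s n : Et (t + s) n = Cmult (Et t n) (Et s n).
Proof.
  unfold Et, cexp, Cmult; cbn [fst snd].
  rewrite !Rmult_plus_distr_r, exp_plus, cos_plus, sin_plus. f_equal; ring.
Qed.

Lemma Et_m1 t n : 0 <= t -> Cmod (Cminus (Et t n) (RtoC 1)) <= t * Cmod (lam n).
Proof.
  intros Ht. unfold Et. eapply Rle_trans. apply cexp_m1.
  pose proof (lam_fst_le0 n). nra.
  replace (t * fst (lam n), t * snd (lam n)) with (Cmult (RtoC t) (lam n)) by cring.
  rewrite Cmod_mult, Cmod_R, Rabs_pos_eq; lra.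
Qed.

Lemma Et_deriv n : tends0 (fun t => Cmod (Cminus (Cmult (RtoC (/ t)) (Cminus (Et t n) (RtoC 1))) (lam n))).
Proof.
  unfold Et. pose proof (cexp_deriv (fst (lam n)) (snd (lam n))). destruct (lam n); auto.
Qed.


Lemma tends0_lin (h : R -> R) c : (forall t, 0 < t < 1 -> 0 <= h t <= t * c) -> tends0 h.
Proof.
  intros H eps He. exists (Rmin 1 (eps / (Rabs c + 1))). split.
  apply Rmin_glb_lt. lra. apply Rdiv_lt_0_compat; auto. pose proof (Rabs_pos c); lra.
  intros t Ht. pose proof (Rmin_l 1 (eps / (Rabs c + 1))). pose proof (Rmin_r 1 (eps / (Rabs c + 1))).
  specialize (H t ltac:(lra)). rewrite Rabs_pos_eq by lra.
  pose proof (Rabs_pos c). pose proof (Rle_abs c).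
  assert (t * (Rabs c + 1) < eps).
  { apply Rlt_le_trans with ((eps / (Rabs c + 1)) * (Rabs c + 1)).
    apply Rmult_lt_compat_r; lra. right; field; lra. }
  nra.
Qed.

Lemma tends0_sq (h : R -> R) K : 0 <= K -> (forall t, 0 <= h t) -> tends0 h ->
  tends0 (fun t => h t ^ 2 * K).
Proof.
  intros HK Hp H eps He. destruct (H (Rmin 1 (eps / (K + 1)))) as [d [Hd H1]].
  apply Rmin_glb_lt. lra. apply Rdiv_lt_0_compat; lra.
  exists d; split; auto. intros t Ht. specialize (H1 t Ht). specialize (Hp t).
  pose proof (Rmin_l 1 (eps / (K + 1))). pose proof (Rmin_r 1 (eps / (K + 1))).
  rewrite Rabs_pos_eq in H1 by auto. rewrite Rabs_pos_eq by nra.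
  assert (h t * (K + 1) < eps).
  { apply Rlt_le_trans with ((eps / (K + 1)) * (K + 1)).
    apply Rmult_lt_compat_r; lra. right; field; lra. }
  nra.
Qed.

Lemma Cmod_diff_le a b : Cmod (Cminus a b) <= Cmod a + Cmod b.
Proof. unfold Cminus. rewrite <- (Cmod_opp b). apply Cmod_triangle. Qed.

Lemma l2_sub x y : in_l2 x -> in_l2 y -> in_l2 (seq_sub x y).
Proof.
  intros Hx Hy. unfold in_l2.
  apply ex_series_R_le with (fun n => 2 * Cmod (x n) ^ 2 + 2 * Cmod (y n) ^ 2).
  intros n. split. apply Cmod_sq_nonneg. unfold seq_sub.
  pose proof (Cmod_diff_le (x n) (y n)). pose proof (Cmod_ge_0 (Cminus (x n) (y n))).
  pose proof (Cmod_ge_0 (x n)). pose proof (Cmod_ge_0 (y n)).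
  assert (Cmod (Cminus (x n) (y n)) ^ 2 <= (Cmod (x n) + Cmod (y n)) ^ 2) by (apply pow_incr; lra). assert (0 <= (Cmod (x n) - Cmod (y n))^2) by apply pow2_ge_0. lra.
  apply ex_series_R_plus; apply ex_series_R_scal; auto.
Qed.

Definition ct t n := Cmult (RtoC (/ t)) (Cminus (Et t n) (RtoC 1)).

Lemma Sg_sub t x n : seq_sub (Sg t x) x n = Cmult (Cminus (Et t n) (RtoC 1)) (x n).
Proof. unfold seq_sub, Sg, diag. cring. Qed.

Lemma q_eq t x n : seq_scal (/ t) (seq_sub (Sg t x) x) n = Cmult (ct t n) (x n).
Proof. unfold seq_scal, seq_sub, Sg, diag, ct. cring. Qed.

Lemma ct_le t n : 0 < t -> Cmod (ct t n) <= Cmod (lam n).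
Proof.
  intros Ht. unfold ct. rewrite Cmod_mult, Cmod_R, Rabs_pos_eq.
  pose proof (Et_m1 t n ltac:(lra)). apply Rmult_le_compat_l with (r := / t) in H.
  rewrite <- Rmult_assoc, Rinv_l in H; lra. left; apply Rinv_0_lt_compat; auto.
  left; apply Rinv_0_lt_compat; auto.
Qed.

Lemma ct_bound t n : 0 < t -> Cmod (ct t n) <= 2 / t.
Proof.
  intros Ht. unfold ct. rewrite Cmod_mult, Cmod_R, Rabs_pos_eq.
  pose proof (Cmod_diff_le (Et t n) (RtoC 1)). rewrite Cmod_1 in H. pose proof (Et_le1 t n ltac:(lra)).
  pose proof (Rinv_0_lt_compat t Ht). unfold Rdiv. nra.
  left; apply Rinv_0_lt_compat; auto.
Qed.

Lemma q_l2 t x : 0 < t -> in_l2 x -> in_l2 (seq_scal (/ t) (seq_sub (Sg t x) x)).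
Proof.
  intros Ht Hx. replace (seq_scal (/ t) (seq_sub (Sg t x) x)) with (diag (ct t) x).
  apply (diag_l2 (ct t) (2 / t) x). left; apply Rdiv_lt_0_compat; lra.
  intros; apply ct_bound; auto. auto.
  apply functional_extensionality; intros n. rewrite q_eq. reflexivity.
Qed.

Lemma Sg_C0 : is_C0_semigroup Sg.
Proof.
  split; [|split; [|split]].
  - intros t Ht. apply (diag_bounded _ 1). lra. intros; apply Et_le1; auto.
  - intros x Hx. apply functional_extensionality; intros n. unfold Sg, diag. rewrite Et_0. apply Cmult_1_l.
  - intros t s x Ht Hs Hx. apply functional_extensionality; intros n. unfold Sg, diag.
    rewrite Et_add. symmetry. apply Cmult_assoc.
  - intros x Hx. apply tends0_filterlim. unfold l2norm. apply sqrt_tends0.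
    + intros t Ht. apply Series_nonneg. intro; apply Cmod_sq_nonneg.
      apply l2_sub; auto. apply (diag_l2 (Et t) 1 x). lra. intros; apply Et_le1; lra. auto.
    + apply dom_tends0 with (g := fun n => 4 * Cmod (x n) ^ 2).
      * apply ex_series_R_scal; auto.
      * intros t n Ht. rewrite Sg_sub, Cmod_mult. split. pose proof (Cmod_ge_0 (x n)).
        pose proof (Cmod_ge_0 (Cminus (Et t n) (RtoC 1))). nra.
        pose proof (Cmod_diff_le (Et t n) (RtoC 1)). rewrite Cmod_1 in H. pose proof (Et_le1 t n ltac:(lra)).
        pose proof (Cmod_ge_0 (x n)). pose proof (Cmod_ge_0 (Cminus (Et t n) (RtoC 1))).
        rewrite Rpow_mult_distr. apply Rmult_le_compat_r. nra. nra.
      * intros n. apply tends0_lin with (c := Cmod (lam n) ^ 2 * Cmod (x n) ^ 2).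
        intros t Ht. rewrite Sg_sub, Cmod_mult. pose proof (Et_m1 t n ltac:(lra)).
        pose proof (Cmod_ge_0 (x n)). pose proof (Cmod_ge_0 (Cminus (Et t n) (RtoC 1))).
        pose proof (Cmod_ge_0 (lam n)). rewrite Rpow_mult_distr. split. nra.
        assert (Cmod (Cminus (Et t n) (RtoC 1)) ^ 2 <= t * Cmod (lam n) ^ 2).
        { apply Rle_trans with ((t * Cmod (lam n)) ^ 2). apply pow_incr; lra. nra. }
        pose proof (Cmod_sq_nonneg (x n)). nra.
Qed.


Lemma gen_conv x : DAop x ->
  filterlim (fun t => l2norm (seq_sub (seq_scal (/ t) (seq_sub (Sg t x) x)) (Aop x)))
            (at_right 0) (locally 0).
Proof.
  intros [Hx HAx]. apply tends0_filterlim. unfold l2norm.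
  assert (Hterm : forall t n, seq_sub (seq_scal (/ t) (seq_sub (Sg t x) x)) (Aop x) n
                 = Cmult (Cminus (ct t n) (lam n)) (x n)).
  { intros t n. unfold seq_sub at 1. rewrite q_eq. unfold Aop, diag. cring. }
  apply sqrt_tends0.
  - intros t Ht. apply Series_nonneg. intro; apply Cmod_sq_nonneg.
    apply l2_sub; auto. apply q_l2; auto.
  - apply dom_tends0 with (g := fun n => 4 * Cmod (Aop x n) ^ 2).
    + apply ex_series_R_scal; auto.
    + intros t n Ht. rewrite Hterm, Cmod_mult. unfold Aop, diag. rewrite Cmod_mult.
      pose proof (ct_le t n Ht). pose proof (Cmod_diff_le (ct t n) (lam n)).
      pose proof (Cmod_ge_0 (x n)). pose proof (Cmod_ge_0 (Cminus (ct t n) (lam n))).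
      pose proof (Cmod_ge_0 (lam n)). split. nra.
      rewrite !Rpow_mult_distr.
      assert (Cmod (Cminus (ct t n) (lam n)) ^ 2 <= 4 * Cmod (lam n) ^ 2).
      { apply Rle_trans with ((2 * Cmod (lam n)) ^ 2). apply pow_incr; lra. nra. }
      pose proof (Cmod_sq_nonneg (x n)). nra.
    + intros n. apply tends0_ext with (fun t => Cmod (Cminus (ct t n) (lam n)) ^ 2 * Cmod (x n) ^ 2).
      intros t. rewrite Hterm, Cmod_mult. ring.
      apply tends0_sq. apply Cmod_sq_nonneg. intros; apply Cmod_ge_0. apply Et_deriv.
Qed.

Lemma Cmod_le_l2 z n : in_l2 z -> Cmod (z n) <= l2norm z.
Proof.
  intros Hz. unfold l2norm. rewrite <- (sqrt_pow2 (Cmod (z n))) by apply Cmod_ge_0.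
  apply sqrt_le_1_alt. apply (term_le_Series (fun k => Cmod (z k) ^ 2)); auto.
  intro; apply Cmod_sq_nonneg.
Qed.

Lemma zero_of_small r : 0 <= r -> (forall eps, 0 < eps -> r < eps) -> r = 0.
Proof.
  intros H1 H2. destruct H1; auto. specialize (H2 (r/2) ltac:(lra)). lra.
Qed.

Lemma gen_back x y : in_l2 x -> in_l2 y ->
  filterlim (fun t => l2norm (seq_sub (seq_scal (/ t) (seq_sub (Sg t x) x)) y))
            (at_right 0) (locally 0) -> Aop x = y.
Proof.
  intros Hx Hy Hl. apply filterlim_tends0 in Hl.
  apply functional_extensionality; intros n.
  assert (Cmod (Cminus (Aop x n) (y n)) = 0).
  { apply zero_of_small. apply Cmod_ge_0. intros eps He.
    destruct (Hl (eps/2) ltac:(lra)) as [d1 [Hd1 H1]].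
    destruct (Et_deriv n (eps / (2 * (Cmod (x n) + 1)))) as [d2 [Hd2 H2]].
    apply Rdiv_lt_0_compat. lra. pose proof (Cmod_ge_0 (x n)); lra.
    set (t := Rmin d1 d2 / 2).
    assert (Ht0 : 0 < t) by (unfold t; apply Rdiv_lt_0_compat; [apply Rmin_glb_lt|]; lra).
    assert (Ht1 : t < d1) by (unfold t; pose proof (Rmin_l d1 d2); lra).
    assert (Ht2 : t < d2) by (unfold t; pose proof (Rmin_r d1 d2); lra).
    specialize (H1 t ltac:(lra)). specialize (H2 t ltac:(lra)).
    rewrite Rabs_pos_eq in H1. 2: { unfold l2norm; apply sqrt_pos. }
    rewrite Rabs_pos_eq in H2 by apply Cmod_ge_0.
    assert (H2' : Cmod (Cminus (ct t n) (lam n)) < eps / (2 * (Cmod (x n) + 1))) by exact H2. clear H2.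
    set (w := seq_sub (seq_scal (/ t) (seq_sub (Sg t x) x)) y) in H1.
    assert (Hw : in_l2 w) by (apply l2_sub; auto; apply q_l2; auto).
    pose proof (Cmod_le_l2 w n Hw).
    assert (Hid : Cminus (Aop x n) (y n) = Cplus (Cmult (Cminus (lam n) (ct t n)) (x n)) (w n)).
    { unfold w, seq_sub at 1. rewrite q_eq. unfold Aop, diag. cring. }
    rewrite Hid. eapply Rle_lt_trans. apply Cmod_triangle. rewrite Cmod_mult.
    replace (Cminus (lam n) (ct t n)) with (Copp (Cminus (ct t n) (lam n))) by cring.
    rewrite Cmod_opp.
    assert (Cmod (Cminus (ct t n) (lam n)) * Cmod (x n) <= eps / 2).
    { pose proof (Cmod_ge_0 (x n)).
      apply Rle_trans with (eps / (2 * (Cmod (x n) + 1)) * (Cmod (x n) + 1)).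
      apply Rmult_le_compat; try lra; apply Cmod_ge_0.
      right; field; lra. }
    lra. }
  apply Cmod_eq_0 in H. replace (Aop x n) with (Cplus (Cminus (Aop x n) (y n)) (y n)) by cring.
  rewrite H. cring.
Qed.

Lemma Sg_gen : generates Aop DAop Sg.
Proof.
  split; [|split].
  - intros x [Hx _]; auto.
  - intros x Hx. split.
    + intros HD. exists (Aop x). split. destruct HD; auto. apply gen_conv; auto.
    + intros [y [Hy Hl]]. pose proof (gen_back x y Hx Hy Hl). split; auto. rewrite H; auto.
  - apply gen_conv.
Qed.


Definition um (n : nat) : C := Cminus (RtoC 1) (lam n).
Definition Rres : op := diag (fun n => Cinv (um n)).

Lemma um_eq n : um n = (1 + / kk n, - kk n).
Proof. unfold um, lam, kk, Cminus, Cplus, Copp, RtoC; simpl. f_equal; ring. Qed.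

Lemma um_mod_ge n : kk n <= Cmod (um n).
Proof.
  rewrite um_eq. unfold Cmod; cbn [fst snd]. pose proof (kk_pos n).
  rewrite <- (sqrt_pow2 (kk n)) at 1 by lra. apply sqrt_le_1_alt.
  pose proof (Rinv_0_lt_compat _ H). nra.
Qed.

Lemma um_nz n : um n <> RtoC 0.
Proof.
  intros E. pose proof (um_mod_ge n). rewrite E, Cmod_0 in H. pose proof (kk_pos n). lra.
Qed.

Lemma lam_le_um n : Cmod (lam n) <= Cmod (um n).
Proof.
  rewrite um_eq. unfold Cmod, lam; cbn [fst snd]. apply sqrt_le_1_alt. fold (kk n).
  pose proof (Rinv_0_lt_compat _ (kk_pos n)). nra.
Qed.

Lemma inv_um_le n : Cmod (Cinv (um n)) <= 1.
Proof.
  rewrite Cmod_inv by apply um_nz. pose proof (um_mod_ge n). pose proof (kk_ge1 n).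
  rewrite <- Rinv_1. apply Rinv_le_contravar; lra.
Qed.

Lemma lam_inv_um_le n : Cmod (Cmult (lam n) (Cinv (um n))) <= 1.
Proof.
  rewrite Cmod_mult, Cmod_inv by apply um_nz. pose proof (um_mod_ge n). pose proof (kk_ge1 n).
  pose proof (lam_le_um n). pose proof (Cmod_ge_0 (lam n)).
  apply Rmult_le_reg_r with (Cmod (um n)). lra. rewrite Rmult_assoc, Rinv_l; lra.
Qed.

Lemma Sres_le t n : 1 <= t -> Cmod (Cmult (Et t n) (Cinv (um n))) <= / t.
Proof.
  intros Ht. rewrite Cmod_mult, Cmod_inv by apply um_nz. rewrite Et_mod, lam_fst.
  pose proof (um_mod_ge n). pose proof (kk_pos n).
  set (k := kk n) in *. set (u := Cmod (um n)) in *.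
  pose proof (exp_ineq1_le (t / k)).
  replace (t * - / k) with (- (t / k)) by (unfold Rdiv; ring). rewrite exp_Ropp.
  assert (t / k < exp (t / k)) by lra.
  assert (0 < t / k) by (apply Rdiv_lt_0_compat; lra).
  assert (/ exp (t / k) <= k / t).
  { replace (k / t) with (/ (t / k)) by (field; lra). apply Rinv_le_contravar; lra. }
  apply Rle_trans with ((k / t) * / k).
  apply Rmult_le_compat. left; apply Rinv_0_lt_compat, exp_pos. left; apply Rinv_0_lt_compat; lra.
  auto. apply Rinv_le_contravar; lra.
  right; field; lra.
Qed.

Lemma Sg_polystable : polynomially_stable Aop DAop Sg 1.
Proof.
  split.
  - exists 1. intros t Ht. apply opnorm_le. lra. intros; apply Et_le1; auto.
  - exists Rres. split; [|split].
    + intros x Hx.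
      assert (HA : Aop (Rres x) = diag (fun n => Cmult (lam n) (Cinv (um n))) x).
      { apply functional_extensionality; intros n. unfold Aop, Rres, diag. apply Cmult_assoc. }
      split. split.
      * apply (diag_l2 _ 1 x). lra. apply inv_um_le. auto.
      * rewrite HA. apply (diag_l2 _ 1 x). lra. apply lam_inv_um_le. auto.
      * apply functional_extensionality; intros n. unfold seq_sub, Aop, Rres, diag.
        replace (Cminus (Cmult (Cinv (um n)) (x n)) (Cmult (lam n) (Cmult (Cinv (um n)) (x n))))
          with (Cmult (Cmult (um n) (Cinv (um n))) (x n)) by (unfold um; cring).
        rewrite Cinv_r by apply um_nz. apply Cmult_1_l.
    + intros x HD. apply functional_extensionality; intros n. unfold seq_sub, Aop, Rres, diag.
      replace (Cmult (Cinv (um n)) (Cminus (x n) (Cmult (lam n) (x n))))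
        with (Cmult (Cmult (Cinv (um n)) (um n)) (x n)) by (unfold um; cring).
      rewrite Cinv_l by apply um_nz. apply Cmult_1_l.
    + exists 1, 1. split. lra. split. lra. intros t Ht.
      replace (fun x => Sg t (Rres x)) with (diag (fun n => Cmult (Et t n) (Cinv (um n)))).
      rewrite Rinv_1, Rpower_Ropp, Rpower_1 by lra. rewrite Rmult_1_l.
      apply opnorm_le. left; apply Rinv_0_lt_compat; lra. intros; apply Sres_le; auto.
      apply functional_extensionality; intros x. apply functional_extensionality; intros n.
      unfold Sg, Rres, diag. symmetry; apply Cmult_assoc.
Qed.

Lemma part1 : exists S : R -> op,
     is_C0_semigroup S /\ generates Aop DAop S /\ polynomially_stable Aop DAop S 1.
Proof. exists Sg. split. apply Sg_C0. split. apply Sg_gen. apply Sg_polystable. Qed.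


Lemma exp_le' a b : a <= b -> exp a <= exp b.
Proof. intros [H|H]. left; apply exp_increasing; auto. subst; lra. Qed.
Lemma ln_le' a b : 0 < a -> a <= b -> ln a <= ln b.
Proof. intros Ha [H|H]. left; apply ln_increasing; auto. subst; lra. Qed.

Lemma ln1p_le h : 0 < h -> ln (1 + h) <= h.
Proof.
  intros Hh. rewrite <- (ln_exp h) at 2. apply ln_le'. lra. apply exp_ineq1_le.
Qed.

Lemma ln_sqrt' q : 0 < q -> ln (sqrt q) = ln q / 2.
Proof.
  intros Hq. assert (0 < sqrt q) by (apply sqrt_lt_R0; auto).
  rewrite <- (sqrt_sqrt q) at 2 by lra. rewrite ln_mult by auto. field.
Qed.

Lemma s_cube al t : 0 < al -> 0 < t ->
  exp (ln (3 * t / al) / 3) ^ 3 = 3 * t / al.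
Proof.
  intros Hal Ht. simpl. rewrite Rmult_1_r, <- !exp_plus.
  replace (ln (3 * t / al) / 3 + (ln (3 * t / al) / 3 + ln (3 * t / al) / 3)) with (ln (3 * t / al)) by field.
  apply exp_ln. apply Rdiv_lt_0_compat; lra.
Qed.

Lemma ln_s al t : 0 < al -> 0 < t ->
  ln (exp (ln (3 * t / al) / 3)) = (ln 3 + ln t - ln al) / 3.
Proof.
  intros Hal Ht. rewrite ln_exp. unfold Rdiv.
  rewrite (ln_mult (3 * t) (/ al)), (ln_mult 3 t), ln_Rinv; try lra.
  apply Rinv_0_lt_compat; lra.
Qed.

Lemma key_bound al t k : 0 < al -> 0 < t -> 1 <= k ->
  exp (ln (3 * t / al) / 3) < k -> k <= exp (ln (3 * t / al) / 3) + 1 ->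
  exp (al / 3 * ln t) * exp (t * ((- / k) / ((- / k) ^ 2 + k ^ 2))) *
  exp (- al * ln (sqrt ((- / k) ^ 2 + k ^ 2))) >=
  exp (- (al / 2) * ln 2 + (al / 3) * (ln al - ln 3 - 1)) * exp (- (al / exp (ln (3 * t / al) / 3))).
Proof.
  intros Hal Ht Hk1 Hsk Hks.
  pose proof (s_cube al t Hal Ht) as Hs3. pose proof (ln_s al t Hal Ht) as Hls.
  set (s := exp (ln (3 * t / al) / 3)) in *.
  assert (Hs : 0 < s) by apply exp_pos.
  assert (Hk : 0 < k) by lra. pose proof (Rinv_0_lt_compat k Hk) as Hik.
  set (Q := (- / k) ^ 2 + k ^ 2).
  assert (HQ1 : k ^ 2 <= Q) by (unfold Q; nra).
  assert (HQ2 : Q <= 2 * k ^ 2).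
  { unfold Q. assert (/ k <= 1). rewrite <- Rinv_1. apply Rinv_le_contravar; lra. nra. }
  assert (HQp : 0 < Q) by nra.
  assert (HX2 : t * ((- / k) / Q) >= - (al / 3)).
  { assert (E1 : (/ k) / Q <= / k ^ 3).
    { unfold Rdiv. replace (/ k ^ 3) with (/ k * / k ^ 2) by (field; lra).
      apply Rmult_le_compat_l. lra. apply Rinv_le_contravar; nra. }
    assert (E2 : t * / k ^ 3 <= al / 3).
    { assert (s ^ 3 <= k ^ 3) by (apply pow_incr; lra).
      apply Rle_trans with (t * / s ^ 3).
      apply Rmult_le_compat_l. lra. apply Rinv_le_contravar. apply pow_lt; lra. auto.
      rewrite Hs3. right; field; lra. }
    replace ((- / k) / Q) with (- ((/ k) / Q)) by (unfold Rdiv; ring).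
    pose proof (Rmult_le_compat_l t _ _ (Rlt_le _ _ Ht) E1). lra. }
  assert (HlnQ : ln Q <= ln 2 + 2 * ln k).
  { replace (ln 2 + 2 * ln k) with (ln (2 * k ^ 2)).
    apply ln_le'; auto. rewrite ln_mult, ln_pow; try lra. simpl; ring. }
  assert (Hlnk : ln k <= ln s + / s).
  { apply Rle_trans with (ln (s + 1)). apply ln_le'; lra.
    replace (s + 1) with (s * (1 + / s)) by (field; lra).
    rewrite ln_mult. pose proof (ln1p_le (/ s) ltac:(apply Rinv_0_lt_compat; lra)). lra.
    lra. pose proof (Rinv_0_lt_compat s Hs). lra. }
  rewrite ln_sqrt' by auto.
  rewrite <- !exp_plus. apply Rle_ge, exp_le'.
  assert (al * ln k <= al * (ln s + / s)) by (apply Rmult_le_compat_l; lra).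
  assert (al * (ln Q) <= al * (ln 2 + 2 * ln k)) by (apply Rmult_le_compat_l; lra).
  rewrite Hls in H. unfold Rdiv in *. lra.
Qed.




Lemma rbar_mult_ge p o c : 0 < p -> Rbar_le (Finite c) o -> Rbar_le (Finite (p * c)) (Rbar_mult (Finite p) o).
Proof.
  intros Hp Ho. destruct o as [r| |]; simpl in *.
  - apply Rmult_le_compat_l; lra.
  - unfold Rbar_mult, Rbar_mult'. destruct (Rle_dec 0 p); try lra.
    destruct (Rle_lt_or_eq_dec 0 p r); simpl; auto. lra.
  - contradiction.
Qed.

Lemma Dmod t al n : Cmod (Cmult (cexp (Cmult (RtoC t) (Cinv (lam n)))) (cpowR (Copp (lam n)) (- al)))
  = exp (t * ((- / INR (S n)) / ((- / INR (S n)) ^ 2 + INR (S n) ^ 2))) *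
    exp (- al * ln (sqrt ((- / INR (S n)) ^ 2 + INR (S n) ^ 2))).
Proof.
  unfold cpowR. rewrite Cmod_mult, !cexp_mod. cbn [fst]. rewrite Cmod_opp.
  f_equal. f_equal. unfold Cmult, RtoC, Cinv, lam; cbn [fst snd]. ring.
Qed.

Lemma b_eq al : 0 < al ->
  / Rpower 2 (al / 2) * Rpower (al / (3 * exp 1)) (al / 3)
  = exp (- (al / 2) * ln 2 + (al / 3) * (ln al - ln 3 - 1)).
Proof.
  intros Hal. unfold Rpower. rewrite <- exp_Ropp, <- exp_plus. f_equal.
  pose proof (exp_pos 1) as He1.
  replace (al / (3 * exp 1)) with (al * / (3 * exp 1)) by reflexivity.
  rewrite (ln_mult al (/ (3 * exp 1))), ln_Rinv, (ln_mult 3 (exp 1)), ln_exp; try lra.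
  apply Rinv_0_lt_compat. lra.
Qed.

Lemma part2 : forall alpha : R, 0 < alpha ->
     liminf_infty_ge
       (fun t => Rbar_mult (Finite (Rpower t (alpha / 3)))
                           (opnorm (expAinv_negApow t alpha)))
       (/ Rpower 2 (alpha / 2) * Rpower (alpha / (3 * exp 1)) (alpha / 3)).
Proof.
  intros al Hal eps He. rewrite (b_eq al Hal).
  set (b0 := exp (- (al / 2) * ln 2 + (al / 3) * (ln al - ln 3 - 1))).
  assert (Hb0 : 0 < b0) by apply exp_pos.
  set (S1 := al * b0 / eps + 1).
  assert (HS1 : 0 < S1) by (unfold S1; assert (0 < al * b0 / eps) by (apply Rdiv_lt_0_compat; nra); lra).
  exists (al / 3 * S1 ^ 3 + 1). intros t Ht.
  assert (HS13 : 0 < S1 ^ 3) by (apply pow_lt; lra).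
  assert (Ht0 : 0 < t) by (assert (0 < al / 3 * S1 ^ 3) by (apply Rmult_lt_0_compat; lra); lra).
  set (s := exp (ln (3 * t / al) / 3)).
  assert (Hs : 0 < s) by apply exp_pos.
  assert (Hs3 : s ^ 3 = 3 * t / al) by (apply (s_cube al t); auto).
  assert (HsS : S1 < s).
  { destruct (Rlt_le_dec S1 s); auto.
    assert (s ^ 3 <= S1 ^ 3) by (apply pow_incr; lra).
    assert (3 * t / al > S1 ^ 3).
    { apply Rlt_gt. apply Rmult_lt_reg_r with al. auto. unfold Rdiv. rewrite Rmult_assoc, Rinv_l; nra. }
    lra. }
  destruct (archimed s) as [Hu1 Hu2].
  set (z := up s) in *.
  assert (Hz : (0 < z)%Z) by (apply lt_0_IZR; lra).
  set (n := Nat.pred (Z.to_nat z)).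
  assert (Hkn : INR (S n) = IZR z).
  { unfold n. replace (S (Nat.pred (Z.to_nat z))) with (Z.to_nat z) by lia.
    rewrite INR_IZR_INZ, Z2Nat.id; auto; lia. }
  assert (Hk1 : 1 <= INR (S n)) by (rewrite S_INR; pose proof (pos_INR n); lra).
  pose proof (key_bound al t (INR (S n)) Hal Ht0 Hk1 ltac:(fold s; lra) ltac:(fold s; lra)) as KB.
  fold s b0 in KB.
  set (c := Cmod (Cmult (cexp (Cmult (RtoC t) (Cinv (lam n)))) (cpowR (Copp (lam n)) (- al)))).
  assert (Hp : 0 < Rpower t (al / 3)) by apply exp_pos.
  apply Rbar_le_trans with (Finite (Rpower t (al / 3) * c)).
  2: { apply rbar_mult_ge; auto. unfold expAinv_negApow.
       apply (opnorm_ge (fun n0 => Cmult (cexp (Cmult (RtoC t) (Cinv (lam n0)))) (cpowR (Copp (lam n0)) (- al))) n). }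
  simpl. unfold c. rewrite Dmod. unfold Rpower.
  assert (Hex : exp (- (al / s)) >= 1 - al / s) by (pose proof (exp_ineq1_le (- (al / s))); lra).
  assert (Hfin : b0 * (al / s) <= eps).
  { apply Rle_trans with (b0 * (al / S1)).
    apply Rmult_le_compat_l. lra. unfold Rdiv. apply Rmult_le_compat_l. lra.
    apply Rinv_le_contravar; lra.
    assert (al * b0 / eps < S1) by (unfold S1; lra).
    apply Rmult_lt_compat_r with (r := eps) in H; auto.
    unfold Rdiv in H. rewrite Rmult_assoc, Rinv_l in H by lra.
    apply Rmult_le_reg_r with S1; auto. unfold Rdiv. rewrite Rmult_assoc, (Rmult_assoc al), Rinv_l by lra. lra. }
  assert (b0 * exp (- (al / s)) >= b0 - eps).
  { assert (b0 * exp (- (al / s)) >= b0 * (1 - al / s)) by (apply Rle_ge, Rmult_le_compat_l; lra). nra. }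
  rewrite <- Rmult_assoc. lra.
Qed.


Theorem mainTheorem5 :
  (exists S : R -> op,
     is_C0_semigroup S /\ generates Aop DAop S /\
     polynomially_stable Aop DAop S 1) /\
  (forall alpha : R, 0 < alpha ->
     liminf_infty_ge
       (fun t => Rbar_mult (Finite (Rpower t (alpha / 3)))
                           (opnorm (expAinv_negApow t alpha)))
       (/ Rpower 2 (alpha / 2) * Rpower (alpha / (3 * exp 1)) (alpha / 3))).
Proof.
  split. apply part1. apply part2.
Qed.
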